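(* Let $G$ and $H$ be finite simple graphs, and let $u\in V(G)$, $v\in V(H)$. Then \[\mathrm{dp}_{G\times H}((u,v))=x^{\deg_G u}\,\mathrm{dp}_H(v)+x^{\deg_H v}\,\mathrm{dp}_G(u).\]
   Context: For a vertex $w$ of a simple graph $\Gamma$, the degree polynomial $\mathrm{dp}_\Gamma(w)\in\mathbb{Z}[x]$ is the polynomial in which the coefficient of $x^{i}$ is the number of neighbors of $w$ in $\Gamma$ having degree $i$ in $\Gamma$ ($\mathrm{dp}_\Gamma(w)=0$ if $w$ is isolated). The Cartesian product $G\times H$ is the simple graph on $V(G)\times V(H)$ in which $(u_1,v_1)\sim(u_2,v_2)$ if and only if either $u_1=u_2$ and $v_1\sim v_2$ in $H$, or $v_1=v_2$ and $u_1\sim u_2$ in $G$. *)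

(* Defs.v *)
From HB Require Import structures.
From mathcomp Require Import all_boot all_order all_algebra.
Set Implicit Arguments. Unset Strict Implicit. Unset Printing Implicit Defensive.
Import GRing.Theory.
Local Open Scope ring_scope.

Definition simple_graph (T : finType) (e : rel T) : Prop :=
  symmetric e /\ irreflexive e.

Definition deg (T : finType) (e : rel T) (w : T) : nat := #|[set y | e w y]|.

Definition dp (T : finType) (e : rel T) (w : T) : {poly int} :=
  \sum_(y in T | e w y) 'X^(deg e y).

Definition cart_rel (T1 T2 : finType) (e1 : rel T1) (e2 : rel T2) : rel (T1 * T2) :=
  fun p q => ((p.1 == q.1) && e2 p.2 q.2) || ((p.2 == q.2) && e1 p.1 q.1).

(* Main.v *)
Require Import Defs.
From HB Require Import structures.
From mathcomp Require Import all_boot all_order all_algebra.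
Import GRing.Theory.
Local Open Scope ring_scope.

Lemma cart_sum (R : nmodType) (T1 T2 : finType) (e1 : rel T1) (e2 : rel T2)
  (hG : simple_graph e1) (a : T1) (b : T2) (F : T1 * T2 -> R) :
  \sum_(p | cart_rel e1 e2 (a, b) p) F p =
  \sum_(y | e2 b y) F (a, y) + \sum_(x | e1 a x) F (x, b).
Proof.
rewrite (bigID (fun p : T1 * T2 => p.1 == a)) /=.
congr (_ + _).
- rewrite -(@big_pred1_eq R 0 +%R _ a (fun x => \sum_(y | e2 b y) F (x, y))).
  rewrite (pair_big_dep (fun i => i == a) (fun _ j => e2 b j) (fun i j => F (i, j))) /=.
  apply: eq_big => [[x y]|[x y] _] //=; rewrite /cart_rel /=.
  rewrite [a == x]eq_sym; case: (eqVneq x a) => [->|Hn] /=; last by rewrite !andbF.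
  by rewrite (proj2 hG a) !andbF !andbT orbF.
- have -> : \sum_(x | e1 a x) F (x, b) = \sum_(x | e1 a x) \sum_(y | y == b) F (x, y).
    by apply: eq_bigr => x _; rewrite (@big_pred1_eq R 0 +%R _ b).
  rewrite (pair_big_dep (fun i => e1 a i) (fun _ j => j == b) (fun i j => F (i, j))) /=.
  apply: eq_big => [[x y]|[x y] _] //=; rewrite /cart_rel /=.
  rewrite [a == x]eq_sym [b == y]eq_sym.
  case: (eqVneq x a) => [->|Hn] /=; first by rewrite (proj2 hG a) ?eqxx !andbF.
  by rewrite andbT andbC.
Qed.

Lemma deg_sum (T : finType) (e : rel T) w : deg e w = (\sum_(y | e w y) 1)%N.
Proof. by rewrite /deg -sum1_card; apply: eq_bigl => y; rewrite inE. Qed.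

Theorem theorem4p16 (T1 T2 : finType) (e1 : rel T1) (e2 : rel T2)
  (hG : simple_graph e1) (hH : simple_graph e2) (u : T1) (v : T2) :
  dp (cart_rel e1 e2) (u, v) = 'X^(deg e1 u) * dp e2 v + 'X^(deg e2 v) * dp e1 u.
Proof.
have degC : forall a b, deg (cart_rel e1 e2) (a, b) = (deg e2 b + deg e1 a)%N.
  move=> a b; rewrite !deg_sum.
  exact: (@cart_sum nat _ _ e1 e2 hG a b (fun _ => 1%N)).
rewrite /dp cart_sum //; congr (_ + _).
- rewrite mulr_sumr; apply: eq_big => // y _; by rewrite degC exprD mulrC.
- rewrite mulr_sumr; apply: eq_big => // x _; by rewrite degC exprD.
Qed.
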